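(* Let $S$ be a qubit with Hamiltonian $H_S=E|1\rangle\langle1|$, $E>0$, let $\beta>0$, and assume the initial state $\rho_S^{(0)}$ is diagonal in the energy eigenbasis with $p^{(0)}_0\ge p^{(0)}_1$. Let $B$ be a single bosonic mode with energy levels $nE$, $n=0,1,2,\dots$, initially in the thermal state $\tau_B=(1-e^{-\beta E})\sum_{n=0}^\infty e^{-n\beta E}|n\rangle\langle n|$. Consider the protocol starting from $\rho^{(0)}_S\otimes\tau_B$ in which, in each round $k$, (1) the unitary $X\otimes\mathbb{I}$ ($X$ the Pauli $X$) is applied to the system–bath state $\rho_{SB}^{(k-1)}$ after round $k-1$, and (2) the unitary $U^\beta_{SB}=|0,0\rangle\langle0,0|+\sum_{n=1}^\infty(|0,n\rangle\langle1,n-1|+|1,n-1\rangle\langle0,n|)$ is then applied, without ever refreshing $B$. Then this protocol is an optimal protocol in $\mathcal{P}_\emptyset$: for every $k$, the ground state population $\langle 0|\mathrm{tr}_B[\rho_{SB}^{(k)}]|0\rangle$ equals the maximum of $p_0^{(k)}$ over all $k$-round protocols in $\mathcal{P}_\emptyset$.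
   Context: A dephasing thermalization on $S$ is a quantum channel $\Lambda$ with $\Lambda(\tau_S)=\tau_S$, where $\tau_S=e^{-\beta H_S}/\mathrm{tr}[e^{-\beta H_S}]$, and $\langle 0|\Lambda(\rho)|1\rangle=0$ for all $\rho$. The protocol class $\mathcal{P}_\emptyset$: each round $k$ consists of an arbitrary unitary on $S$ followed by an arbitrary dephasing thermalization on $S$, producing $\rho_S^{(k)}$ from $\rho_S^{(k-1)}$; $p_0^{(k)}=\langle0|\rho_S^{(k)}|0\rangle$. States $|s,n\rangle=|s\rangle_S\otimes|n\rangle_B$. *)

(* Defs.v *)
From HB Require Import structures.
From mathcomp Require Import all_boot all_order all_algebra.
From mathcomp Require Import all_classical all_reals all_analysis.
From mathcomp.real_closed Require Import complex.

Set Implicit Arguments.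
Unset Strict Implicit.
Unset Printing Implicit Defensive.

Import Order.TTheory GRing.Theory Num.Theory numFieldNormedType.Exports.
Local Open Scope ring_scope.
Local Open Scope complex_scope.

Section Qubit.
Variable R : realType.

(* 2x2 complex matrices = operators on the qubit S; index 0 = |0>, 1 = |1>. *)
Definition qmat := 'M[R[i]]_2.

Definition adj (A : qmat) : qmat := \matrix_(i < 2, j < 2) (A j i)^*.

Definition unitary (U : qmat) : Prop := adj U *m U = 1%:M.

(* density matrices: positive semidefinite (for all v, v^dag rho v >= 0 in
   the partial order of R[i], i.e. real and nonnegative) with unit trace *)
Definition density (rho : qmat) : Prop :=
  (forall v : 'cV[R[i]]_2, 0 <= ((\matrix_(i < 1, j < 2) (v j 0)^*) *m rho *m v) 0 0)
  /\ \tr rho = 1.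

(* a quantum channel (CPTP map) on S, given by a finite Kraus family *)
Definition kraus_apply (Ks : seq qmat) (rho : qmat) : qmat :=
  \sum_(K <- Ks) (K *m rho *m adj K).
Definition is_channel (Ks : seq qmat) : Prop :=
  \sum_(K <- Ks) (adj K *m K) = 1%:M.

(* the Gibbs state of H_S = E |1><1| at inverse temperature beta:
   tau_S = e^{-beta H_S} / tr e^{-beta H_S} = diag(1, e^{-beta E}) / (1 + e^{-beta E}) *)
Definition gibbs_qubit (E beta : R) : qmat :=
  let q := expR (- (beta * E)) in
  \matrix_(i < 2, j < 2)
    (if i == j then (if i == 0 then (1 / (1 + q))%:C else (q / (1 + q))%:C)
     else 0).

Definition dephasing_thermalization (E beta : R) (Ks : seq qmat) : Prop :=
  [/\ is_channel Ks,
      kraus_apply Ks (gibbs_qubit E beta) = gibbs_qubit E beta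
    & forall rho, density rho -> kraus_apply Ks rho 0 1 = 0].

Definition P_empty_protocol (E beta : R) (k : nat)
    (Us : nat -> qmat) (Ls : nat -> seq qmat) : Prop :=
  forall i, (i < k)%N -> unitary (Us i) /\ dephasing_thermalization E beta (Ls i).

Fixpoint run_protocol (Us : nat -> qmat) (Ls : nat -> seq qmat)
    (rho0 : qmat) (k : nat) : qmat :=
  match k with
  | 0 => rho0
  | k'.+1 => kraus_apply (Ls k')
               (Us k' *m run_protocol Us Ls rho0 k' *m adj (Us k'))
  end.

Definition diag_state (p0 p1 : R) : qmat :=
  \matrix_(i < 2, j < 2)
    (if i == j then (if i == 0 then p0%:C else p1%:C) else 0).

(* ---------------- the bath protocol ----------------
   Basis of S (x) B: |s, n>, s : bool (false = |0>, true = |1>), n : nat.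
   Every state occurring in the bath protocol is diagonal in this basis
   (the initial state rho_S^(0) (x) tau_B is, and X (x) I and U^beta_SB
   permute basis vectors), so it is represented by its populations
   f : bool * nat -> R.  A basis-permuting unitary U with U|x> = |sigma x>
   maps the diagonal state with populations f to the one with populations
   f o sigma^{-1}. *)

Definition X_basis (x : bool * nat) : bool * nat := (~~ x.1, x.2).

Definition U_basis (x : bool * nat) : bool * nat :=
  match x with
  | (false, 0) => (false, 0)
  | (false, n.+1) => (true, n)
  | (true, n) => (false, n.+1)
  end.

Lemma X_basis_invol x : X_basis (X_basis x) = x.
Proof. by case: x => [[] n]. Qed.

Lemma U_basis_invol x : U_basis (U_basis x) = x.
Proof. by case: x => [[] [|n]]. Qed.

Definition perm_act (sigma_inv : bool * nat -> bool * nat)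
    (f : bool * nat -> R) : bool * nat -> R := fun y => f (sigma_inv y).

(* initial populations of rho_S^(0) (x) tau_B, with
   tau_B = (1 - e^{-beta E}) sum_n e^{-n beta E} |n><n| *)
Definition bath_init (E beta p0 p1 : R) (x : bool * nat) : R :=
  let q := expR (- (beta * E)) in
  (if x.1 then p1 else p0) * ((1 - q) * q ^+ x.2).

(* rho_SB^(k): each round applies X (x) I, then U^beta_SB (both involutions,
   so sigma_inv = sigma) *)
Fixpoint bath_run (E beta p0 p1 : R) (k : nat) : bool * nat -> R :=
  match k with
  | 0 => bath_init E beta p0 p1
  | k'.+1 => perm_act U_basis (perm_act X_basis (bath_run E beta p0 p1 k'))
  end.

(* <0| tr_B rho_SB^(k) |0> = sum_{n >= 0} <0,n| rho_SB^(k) |0,n> *)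
Definition bath_ground_pop (E beta p0 p1 : R) (k : nat) : R :=
  limn (fun N : nat => (\sum_(0 <= n < N) bath_run E beta p0 p1 k (false, n) : R)).

End Qubit.

(* Main.v *)
Require Import Defs.
From HB Require Import structures.
From mathcomp Require Import all_boot all_order all_algebra.
From mathcomp Require Import all_classical all_reals all_analysis.
From mathcomp.real_closed Require Import complex.
From mathcomp Require Import ring lra.
Import Order.TTheory GRing.Theory Num.Theory numFieldNormedType.Exports.
Local Open Scope ring_scope.
Local Open Scope complex_scope.

Section Aux.
Variable R : realType.
Implicit Types (A B U : qmat R).

Definition rowc (v : 'cV[R[i]]_2) : 'rV[R[i]]_2 := \matrix_(i < 1, j < 2) (v j 0)^*.
Definition psd A : Prop := forall v : 'cV[R[i]]_2, 0 <= (rowc v *m A *m v) 0 0.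

Lemma rowc_adj B v : rowc (adj B *m v) = rowc v *m B.
Proof.
apply/matrixP => i j; rewrite !mxE rmorph_sum; apply: eq_bigr => k _.
by rewrite !mxE rmorphM /= conjcK mulrC.
Qed.

Lemma psd_conj A B : psd A -> psd (B *m A *m adj B).
Proof.
move=> hA v; have -> : rowc v *m (B *m A *m adj B) *m v = rowc (adj B *m v) *m A *m (adj B *m v).
  by rewrite rowc_adj !mulmxA.
exact: hA.
Qed.

Lemma psd_add A B : psd A -> psd B -> psd (A + B).
Proof.
move=> hA hB v; rewrite mulmxDr mulmxDl mxE; exact: addr_ge0.
Qed.

Lemma psd0 : psd 0.
Proof. by move=> v; rewrite mulmx0 mul0mx mxE. Qed.

Lemma psd_kraus Ks A : psd A -> psd (kraus_apply Ks A).
Proof.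
move=> hA; rewrite /kraus_apply; elim: Ks => [|K Ks IH].
  by rewrite big_nil; exact: psd0.
by rewrite big_cons; apply: psd_add => //; exact: psd_conj.
Qed.

Lemma quad2 v A : (rowc v *m A *m v) 0 0 =
  (v 0 0)^* * A 0 0 * v 0 0 + (v 0 0)^* * A 0 1 * v 1 0 +
  (v 1 0)^* * A 1 0 * v 0 0 + (v 1 0)^* * A 1 1 * v 1 0.
Proof.
rewrite !mxE !big_ord_recl !big_ord0 !mxE !big_ord_recl !big_ord0 !mxE /=.
rewrite !addr0.
have -> : lift ord0 ord0 = 1 :> 'I_2 by apply: val_inj.
ring.
Qed.

Lemma psd_diag (a b : R) : 0 <= a -> 0 <= b -> psd (diag_state a b).
Proof.
move=> ha hb v; rewrite quad2 !mxE /=.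
have -> : (v 0 0)^* * a%:C * v 0 0 + (v 0 0)^* * 0 * v 1 0 + (v 1 0)^* * 0 * v 0 0 +
    (v 1 0)^* * b%:C * v 1 0 = a%:C * (v 0 0 * (v 0 0)^*) + b%:C * (v 1 0 * (v 1 0)^*) by ring.
by apply: addr_ge0; apply: mulr_ge0; rewrite ?ler0c // mulcJ_ge0.
Qed.


Lemma kraus_tr Ks A : is_channel Ks -> \tr (kraus_apply Ks A) = \tr A.
Proof.
rewrite /is_channel /kraus_apply => hK.
rewrite raddf_sum.
have -> : \tr A = \tr ((\sum_(K <- Ks) (adj K *m K)) *m A) by rewrite hK mul1mx.
rewrite mulmx_suml raddf_sum; apply: eq_bigr => K _.
etransitivity; first exact: mxtrace_mulC.
by rewrite mulmxA.
Qed.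

Lemma kraus_lin Ks A B (c : R[i]) :
  kraus_apply Ks (A - c *: B) = kraus_apply Ks A - c *: kraus_apply Ks B.
Proof.
rewrite /kraus_apply scaler_sumr -sumrB; apply: eq_bigr => K _.
by rewrite mulmxBr mulmxBl -scalemxAr -scalemxAl.
Qed.

Lemma unitary_r U : unitary U -> U *m adj U = 1%:M.
Proof. by move=> hU; apply: mulmx1C. Qed.

Lemma conj_scalar U (m : R[i]) : unitary U -> U *m m%:M *m adj U = m%:M.
Proof.
move=> hU; rewrite mul_mx_scalar -scalemxAl unitary_r //.
by rewrite -mul_scalar_mx mulmx1.
Qed.

Lemma tr_conj U A : unitary U -> \tr (U *m A *m adj U) = \tr A.
Proof.
by move=> hU; rewrite mxtrace_mulC mulmxA hU mul1mx.
Qed.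

End Aux.
Arguments psd {R} A.
Arguments rowc {R} v.

Section Aux2.
Variable R : realType.
Implicit Types (A B U : qmat R).

Lemma q_facts {E beta : R} : 0 < E -> 0 < beta ->
  0 < expR (- (beta * E)) /\ expR (- (beta * E)) < 1.
Proof.
move=> hE hb; split; first exact: expR_gt0.
rewrite -expR0 ltr_expR oppr_lt0; exact: mulr_gt0.
Qed.

Lemma fa (q m : R) : 1 + q != 0 -> - (q * m) = - (m * (1 + q) * (1 / (1 + q))) + m * (1 - q).
Proof. move=> h. by field. Qed.
Lemma fb (q m : R) : 1 + q != 0 -> - (q * m) = - (m * (1 + q) * (q / (1 + q))).
Proof. move=> h. by field. Qed.

Lemma step (E beta m : R) (U : qmat R) (Ks : seq (qmat R)) (rho : qmat R) : 0 < E -> 0 < beta -> 0 <= m ->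
  unitary U -> dephasing_thermalization E beta Ks -> \tr rho = 1 ->
  psd (rho - m%:C%:M) ->
  \tr (kraus_apply Ks (U *m rho *m adj U)) = 1 /\
  psd (kraus_apply Ks (U *m rho *m adj U) - (expR (- (beta * E)) * m)%:C%:M).
Proof.
move=> hE hb hm hU [hch hfix _] htr hpsd.
have [q0 q1] := q_facts hE hb.
set q := expR (- (beta * E)) in q0 q1 hfix *.
split; first by rewrite kraus_tr // tr_conj.
set sig := U *m rho *m adj U.
have hs : psd (sig - m%:C%:M).
  have -> : sig - m%:C%:M = U *m (rho - m%:C%:M) *m adj U.
    by rewrite mulmxBr mulmxBl conj_scalar.
  exact: psd_conj.
clearbody sig.
have q1n : 1 + q != 0 by rewrite lt0r_neq0 // ltr_wpDr // ltW.
set c := (m * (1 + q))%:C.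
have e1 : sig - c *: gibbs_qubit E beta = (sig - m%:C%:M) + diag_state 0 (m * (1 - q)).
  apply/matrixP => i j; rewrite !mxE.
  case: i => [[|[|//]] hi]; case: j => [[|[|//]] hj]; rewrite /= ?mulr0 ?subr0 ?addr0 ?add0r -/q ?mulr1n.
  - rewrite -rmorphM /=. congr (_ - _%:C). by field.
  - done.
  - done.
  - have key : (m * (1 + q))%:C * (q / (1 + q))%:C = m%:C - (m * (1 - q))%:C.
      by apply/eqP; rewrite eq_complex /= !mulr0 !mul0r ?subr0 ?addr0 ?subrr eqxx andbT; apply/eqP; field.
    rewrite /c key; ring.
have e2 : kraus_apply Ks sig - (q * m)%:C%:M =
    kraus_apply Ks (sig - c *: gibbs_qubit E beta) + diag_state (m * (1 - q)) 0.
  rewrite kraus_lin hfix -addrA; congr (_ + _).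
  apply/matrixP => i j; rewrite !mxE.
  case: i => [[|[|//]] hi]; case: j => [[|[|//]] hj]; rewrite /= ?mulr0 ?subr0 ?addr0 ?add0r ?oppr0 -/q ?mulr1n.
  - rewrite /c; apply/eqP; rewrite eq_complex /= ?(mulr0, mul0r, subr0, addr0, oppr0, add0r, subrr, eqxx, andbT); apply/eqP.
    exact: fa.
  - done.
  - done.
  - rewrite /c; apply/eqP; rewrite eq_complex /= ?(mulr0, mul0r, subr0, addr0, oppr0, add0r, subrr, eqxx, andbT); apply/eqP.
    exact: fb.
rewrite e2; apply: psd_add.
  apply: psd_kraus; rewrite e1; apply: psd_add => //; apply: psd_diag => //.
  by apply: mulr_ge0 => //; rewrite subr_ge0 ltW.
apply: psd_diag => //.
by apply: mulr_ge0 => //; rewrite subr_ge0 ltW.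
Qed.

End Aux2.

Section Aux3.
Variable R : realType.

Lemma tr2 (A : qmat R) : \tr A = A 0 0 + A 1 1.
Proof.
rewrite /mxtrace !big_ord_recl big_ord0 addr0 /=.
by have -> : lift ord0 ord0 = 1 :> 'I_2 by apply: val_inj.
Qed.

Lemma invariant (E beta p0 p1 : R) (k : nat) Us Ls :
  0 < E -> 0 < beta -> 0 <= p1 -> p1 <= p0 -> p0 + p1 = 1 ->
  P_empty_protocol E beta k Us Ls ->
  forall j, (j <= k)%N ->
  \tr (run_protocol Us Ls (diag_state p0 p1) j) = 1 /\
  psd (run_protocol Us Ls (diag_state p0 p1) j - ((expR (- (beta * E))) ^+ j * p1)%:C%:M).
Proof.
move=> hE hb hp1 hp hsum hP; elim=> [_|j IH hj] /=.
  split; first by rewrite tr2 !mxE /= -rmorphD hsum.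
  have -> : diag_state p0 p1 - ((expR (- (beta * E)) ^+ 0 * p1)%:C)%:M = diag_state (p0 - p1) 0.
    apply/matrixP => i j; rewrite !mxE expr0 mul1r.
    case: i => [[|[|//]] hi]; case: j => [[|[|//]] hj] /=; rewrite ?mulr1n ?subr0 ?subrr //.
    by rewrite -rmorphB.
  by apply: psd_diag; rewrite ?subr_ge0.
have [hU hD] := hP j hj.
have [IH1 IH2] := IH (ltnW hj).
have [q0 q1] := @q_facts R E beta hE hb.
have := @step R E beta _ _ _ _ hE hb _ hU hD IH1 IH2.
rewrite exprS mulrA; apply.
by apply: mulr_ge0 => //; apply: exprn_ge0; apply: ltW.
Qed.

Lemma upper (E beta p0 p1 : R) (k : nat) Us Ls :
  0 < E -> 0 < beta -> 0 <= p1 -> p1 <= p0 -> p0 + p1 = 1 ->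
  P_empty_protocol E beta k Us Ls ->
  run_protocol Us Ls (diag_state p0 p1) k 0 0 <= (1 - (expR (- (beta * E))) ^+ k * p1)%:C.
Proof.
move=> hE hb hp1 hp hsum hP.
have [htr hpsd] := @invariant E beta p0 p1 k Us Ls hE hb hp1 hp hsum hP k (leqnn k).
set rho := run_protocol Us Ls (diag_state p0 p1) k in htr hpsd *.
set m := expR (- (beta * E)) ^+ k * p1 in hpsd *.
have := hpsd (\col_(i < 2) (if i == 1 then 1 else 0)).
have c0 : (0 : R[i])^* = 0 by apply/eqP; rewrite eq_complex /= oppr0 !eqxx.
have c1 : (1 : R[i])^* = 1 by apply/eqP; rewrite eq_complex /= oppr0 !eqxx.
rewrite quad2 !mxE /= conjC0 conjC1 !mul0r !mulr0 !add0r !mul1r !mulr1 ?mulr0n ?subr0. rewrite tr2 in htr.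
have -> : rho 0 0 = 1 - rho 1 1 by rewrite -htr addrK.
move=> h; rewrite rmorphB /= -subr_ge0.
have -> : (1%:C - m%:C) - (1 - rho 1 1) = rho 1 1 - m%:C by ring.
by rewrite mulr1n in h.
Qed.

End Aux3.

Section Aux4.
Variable R : realType.
Variables (E beta p0 p1 : R).
Let q := expR (- (beta * E)).

Lemma bath_closed k n :
  bath_run E beta p0 p1 k (true, n) = p1 * ((1 - q) * q ^+ (n + k)) /\
  bath_run E beta p0 p1 k (false, n) =
    if (n < k)%N then p1 * ((1 - q) * q ^+ (k - n.+1))
    else p0 * ((1 - q) * q ^+ (n - k)).
Proof.
elim: k n => [|k IH] n.
  by rewrite /= /bath_init /= addn0 subn0.
have e : forall y, bath_run E beta p0 p1 k.+1 y = bath_run E beta p0 p1 k (X_basis (U_basis y)).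
  by [].
split.
  by rewrite e /= (proj1 (IH n.+1)) addSn addnS.
case: n => [|n]; rewrite e /=.
  by rewrite (proj1 (IH 0)) add0n subSS subn0.
by rewrite (proj2 (IH n)) ltnS !subSS.
Qed.

Lemma bath_psum k N :
  \sum_(0 <= n < N) bath_run E beta p0 p1 k (false, n) =
  if (N <= k)%N then p1 * (q ^+ (k - N) - q ^+ k)
  else p1 * (1 - q ^+ k) + p0 * (1 - q ^+ (N - k)).
Proof.
elim: N => [|N IH].
  by rewrite big_geq // leq0n subn0 subrr mulr0.
rewrite big_nat_recr //= IH (proj2 (bath_closed k N)).
case: (ltnP N k) => hNk.
  by rewrite (ltnW hNk) -(subnSK hNk) exprS; ring.
case: (ltngtP N k) => h.
- by rewrite ltnNge hNk in h.
- rewrite /= (subSn (ltnW h)) exprS; ring.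
- subst N; rewrite ?leqnn subnn subSn // subnn expr1 expr0; ring.
Qed.

Lemma bath_pop k : 0 < E -> 0 < beta -> p0 + p1 = 1 ->
  bath_ground_pop E beta p0 p1 k = 1 - q ^+ k * p1.
Proof.
move=> hE hb hsum.
have q0 : 0 < q by exact: expR_gt0.
have q1 : q < 1 by rewrite /q -expR0 ltr_expR oppr_lt0; exact: mulr_gt0.
set L := p1 * (1 - q ^+ k) + p0.
have hL : L = 1 - q ^+ k * p1.
  have hp0 : p0 = 1 - p1 by rewrite -hsum addrK.
  by rewrite /L hp0; ring.
rewrite -hL /bath_ground_pop.
apply: cvg_lim => //.
rewrite -(cvg_shiftn k).
have -> : (fun n => \sum_(0 <= n0 < n + k) bath_run E beta p0 p1 k (false, n0)) =
    (fun n => L - p0 * q ^+ n).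
  apply: funext => n; rewrite bath_psum.
  case: n => [|n]; first by rewrite add0n leqnn subnn ?expr0 /L; ring.
  by rewrite addSn ltnNge leq_addl /= -addSn addnK /L; ring.
have hq : `|q| < 1 by rewrite ger0_norm // ltW.
have h : ((fun n => L - p0 * q ^+ n) @ \oo --> L - p0 * 0)%classic.
  exact: (cvgB (cvg_cst L) (cvgM (cvg_cst p0) (cvg_expr hq))).
rewrite mulr0 subr0 in h; exact: h.
Qed.
End Aux4.

Section Aux5.
Variable R : realType.
Variable q : R.
Hypothesis q0 : 0 <= q.
Hypothesis q1 : q <= 1.

Definition Xm : qmat R := \matrix_(i < 2, j < 2) (if i == j then 0 else 1).
Definition K1 : qmat R := \matrix_(i < 2, j < 2) (if (i == 0) && (j == 1) then 1 else 0).
Definition K2 : qmat R := \matrix_(i < 2, j < 2) (if (i == 0) && (j == 0) then (Num.sqrt (1 - q))%:C else 0).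
Definition K3 : qmat R := \matrix_(i < 2, j < 2) (if (i == 1) && (j == 0) then (Num.sqrt q)%:C else 0).
Definition Lq : seq (qmat R) := [:: K1; K2; K3].

Lemma cr (x : R) : (x%:C)^* = x%:C.
Proof. by apply/eqP; rewrite eq_complex /= oppr0 !eqxx. Qed.

Lemma s2 (x : R) : 0 <= x -> (Num.sqrt x)%:C * (Num.sqrt x)%:C = x%:C.
Proof.
move=> hx; apply/eqP; rewrite eq_complex /= !mulr0 !mul0r subr0 addr0 eqxx andbT.
by rewrite -expr2 sqr_sqrtr.
Qed.

Lemma c00 : (0 +i* 0 : R[i]) = 0. Proof. by []. Qed.
Lemma c10 : (1 +i* 0 : R[i]) = 1. Proof. by []. Qed.
Lemma cx0 (x : R) : (x +i* 0 : R[i]) = x%:C. Proof. by []. Qed.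
Lemma l1 : lift ord0 ord0 = 1 :> 'I_2. Proof. exact: val_inj. Qed.

Lemma kraus_L (A : qmat R) : kraus_apply Lq A =
  \matrix_(i < 2, j < 2) (if i == j then (if i == 0 then A 1 1 + (1 - q)%:C * A 0 0 else q%:C * A 0 0) else 0).
Proof.
rewrite /kraus_apply /Lq !big_cons big_nil addr0.
apply/matrixP => i j; rewrite !mxE.
do ! rewrite !big_ord_recl !big_ord0 !mxE.
case: i => [[|[|//]] hi]; case: j => [[|[|//]] hj] /=.
all: rewrite ?oppr0 ?c00 ?c10 ?cx0 ?mulr0 ?mul0r ?addr0 ?add0r ?mulr1 ?mul1r ?l1.
- by rewrite mulrAC s2 ?subr_ge0.
- by ring.
- by ring.
- by rewrite mulrAC s2.
Qed.


Ltac brute := apply/matrixP; case=> [[|[|//]] hi]; case=> [[|[|//]] hj]; rewrite !mxE;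
  do ! rewrite !big_ord_recl !big_ord0 !mxE; rewrite /=;
  rewrite ?oppr0 ?c00 ?c10 ?cx0 ?mulr0 ?mul0r ?addr0 ?add0r ?mulr1 ?mul1r ?l1.

Lemma Xm_unitary : unitary Xm.
Proof. by rewrite /unitary; brute. Qed.

Lemma Lq_channel : is_channel Lq.
Proof. rewrite /is_channel /Lq !big_cons big_nil addr0. brute.
- rewrite s2 ?subr_ge0 // s2 //; apply/eqP; rewrite eq_complex /= addr0 subrK !eqxx.
  done.
- done.
- done.
- done.
Qed.


Lemma Lq_offdiag A : kraus_apply Lq A 0 1 = 0.
Proof. by rewrite kraus_L mxE. Qed.

Lemma fc1 : 1 + q != 0 -> q / (1 + q) + ((1 - q) * (1 / (1 + q)) - 0 * 0) = 1 / (1 + q).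
Proof. by move=> h; field. Qed.
Lemma fc2 : 1 + q != 0 -> q * (1 / (1 + q)) - 0 * 0 = q / (1 + q).
Proof. by move=> h; field. Qed.

Lemma Lq_gibbs E beta : q = expR (- (beta * E)) ->
  kraus_apply Lq (gibbs_qubit E beta) = gibbs_qubit E beta.
Proof.
move=> hq; have hn : 1 + q != 0 by rewrite lt0r_neq0 // ltr_pwDl.
rewrite kraus_L; apply/matrixP; case=> [[|[|//]] hi]; case=> [[|[|//]] hj]; rewrite !mxE /=.
- apply/eqP; rewrite eq_complex /= !mulr0 !mul0r ?addr0 ?subr0 eqxx andbT; apply/eqP.
  rewrite hq; rewrite hq in hn; by field.
- done.
- done.
- apply/eqP; rewrite eq_complex /= !mulr0 !mul0r ?addr0 ?subr0 eqxx andbT; apply/eqP.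
  rewrite hq; rewrite hq in hn; by field.
Qed.


Lemma XDX (a b : R) : Xm *m diag_state a b *m adj Xm = diag_state b a.
Proof. by brute. Qed.

Lemma run_opt (p1 : R) j :
  run_protocol (fun=> Xm) (fun=> Lq) (diag_state (1 - p1) p1) j =
  diag_state (1 - q ^+ j * p1) (q ^+ j * p1).
Proof.
elim: j => [|j IH] /=; first by rewrite expr0 mul1r.
rewrite IH XDX kraus_L; apply/matrixP; case=> [[|[|//]] hi]; case=> [[|[|//]] hj]; rewrite !mxE /=.
- apply/eqP; rewrite eq_complex /= !mulr0 !mul0r ?addr0 ?subr0 eqxx andbT; apply/eqP.
  by rewrite exprS; ring.
- done.
- done.
- apply/eqP; rewrite eq_complex /= !mulr0 !mul0r ?addr0 ?subr0 eqxx andbT; apply/eqP.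
  by rewrite exprS; ring.
Qed.

End Aux5.


Theorem theorem2 (R : realType) (E beta p0 p1 : R) :
  0 < E -> 0 < beta -> 0 <= p1 -> p1 <= p0 -> p0 + p1 = 1 ->
  forall k : nat,
    (exists (Us : nat -> qmat R) (Ls : nat -> seq (qmat R)),
        P_empty_protocol E beta k Us Ls /\
        run_protocol Us Ls (diag_state p0 p1) k 0 0
          = (bath_ground_pop E beta p0 p1 k)%:C) /\
    (forall (Us : nat -> qmat R) (Ls : nat -> seq (qmat R)),
        P_empty_protocol E beta k Us Ls ->
        run_protocol Us Ls (diag_state p0 p1) k 0 0
          <= (bath_ground_pop E beta p0 p1 k)%:C).
Proof.
move=> hE hb hp1 hp hsum k.
have [q0 q1] := @q_facts R E beta hE hb.
rewrite (@bath_pop R E beta p0 p1 k hE hb hsum).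
split; last first.
  by move=> Us Ls hP; exact: upper.
have q0' := ltW q0; have q1' := ltW q1.
exists (fun=> Xm R), (fun=> Lq R (expR (- (beta * E)))).
split.
  move=> i _; split; first exact: Xm_unitary.
  split.
  - exact: Lq_channel.
  - exact: (@Lq_gibbs R _ q0' q1' E beta).
  - by move=> rho _; exact: Lq_offdiag.
have hp0 : p0 = 1 - p1 by rewrite -hsum addrK.
by rewrite hp0 (@run_opt R _ q0' q1') mxE.
Qed.
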